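(* Let Assumptions 1 and 2 hold and $\eta>0$. Define $H:\mathbb{R}^N_{++}\to\mathbb{R}^N_{++}$ by $H(y)=\nabla_\theta\big(e^{\varphi_1(\theta)}\big)\big|_{\theta=\log y}$ (componentwise logarithm), and assume $H$ is a bijection of $\mathbb{R}^N_{++}$ onto itself with inverse $\Phi=H^{-1}$. Let $u_1,\dots,u_T\in\mathbb{R}^N$ be arbitrary and let $x_t=\nabla\varphi_\eta(\theta_{t-1})$, $t=1,\dots,T$, be the SSA (equivalently FTRL) choices. Then $x_t\in\mathbb{R}^N_{++}$ and, writing $\alpha(x)=\log\Phi(x)$ (componentwise), for all $t\ge1$ with $t+1\le T$ and all $j\in A$, $$x_{t+1,j}=\frac{H_j\big(e^{u_t/\eta+\alpha(x_t)}\big)}{\sum_{i=1}^N H_i\big(e^{u_t/\eta+\alpha(x_t)}\big)},$$ where $e^{v}$ denotes the componentwise exponential of a vector $v$.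
   Context: Let $N\ge 2$, $A=\{1,\dots,N\}$, and $\Delta_N=\{x\in\mathbb{R}^N: x_i\ge 0,\ \sum_i x_i=1\}$. Let $\epsilon=(\epsilon_1,\dots,\epsilon_N)$ be a random vector satisfying Assumption 1: each $\epsilon_i$ is integrable with $\mathbb{E}[\epsilon_i]=0$, and the law of $\epsilon$ is absolutely continuous with respect to Lebesgue measure on $\mathbb{R}^N$ with support all of $\mathbb{R}^N$. For $\eta>0$ the social surplus function is $\varphi_\eta(\theta)=\mathbb{E}[\max_{j\in A}(\theta_j+\eta\epsilon_j)]$, $\theta\in\mathbb{R}^N$; thus $\varphi_\eta(\theta)=\eta\varphi_1(\theta/\eta)$. $\varphi_\eta$ is convex and differentiable with $\nabla\varphi_\eta(\theta)\in\Delta_N$. Assumption 2: $\varphi_1$ is twice continuously differentiable and there is a constant $L>0$ with $2\,\mathrm{tr}(\nabla^2\varphi_1(\theta))\le L$ for all $\theta\in\mathbb{R}^N$. Set $\theta_0=0$, $\theta_t=\sum_{s=1}^tu_s$; $\mathbb{R}^N_{++}$ is the set of vectors with all coordinates strictly positive. *)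

(* Defs.v *)
From HB Require Import structures.
From mathcomp Require Import all_boot all_order all_algebra.
From mathcomp Require Import all_classical all_reals all_analysis.
Set Implicit Arguments. Unset Strict Implicit. Unset Printing Implicit Defensive.
Import Order.TTheory GRing.Theory Num.Theory.
Import numFieldNormedType.Exports.
Local Open Scope classical_set_scope.
Local Open Scope ring_scope.

(* Vectors of R^N are row vectors 'rV[R]_N; component j of v is v ord0 j. *)

Section Defs.
Variables (R : realType) (N : nat).

Definition partial (i : 'I_N) (f : 'rV[R]_N -> R) (x : 'rV[R]_N) : R :=
  'D_(delta_mx ord0 i) f x.

Definition grad (f : 'rV[R]_N -> R) (x : 'rV[R]_N) : 'rV[R]_N :=
  \row_i partial i f x.

Definition C2 (f : 'rV[R]_N -> R) : Prop :=
  (forall x, differentiable f x) /\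
  (forall i x, differentiable (partial i f) x) /\
  (forall i j, continuous (partial j (partial i f))).

Definition hess_trace (f : 'rV[R]_N -> R) (x : 'rV[R]_N) : R :=
  \sum_i partial i (partial i f) x.

Definition posv (y : 'rV[R]_N) : Prop := forall j, 0 < y ord0 j.

Definition vexp (v : 'rV[R]_N) : 'rV[R]_N := map_mx (@expR R) v.
Definition vlog (v : 'rV[R]_N) : 'rV[R]_N := map_mx (@ln R) v.

Definition box (a b : 'rV[R]_N) : set 'rV[R]_N :=
  [set x | forall i, a ord0 i <= x ord0 i <= b ord0 i].
Definition box_vol (a b : 'rV[R]_N) : R := \prod_i (b ord0 i - a ord0 i).

Definition lebesgue_null (B : set 'rV[R]_N) : Prop :=
  forall e : R, 0 < e -> exists a b : nat -> 'rV[R]_N,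
    (forall k i, a k ord0 i <= b k ord0 i) /\
    B `<=` \bigcup_k box (a k) (b k) /\
    (forall n, \sum_(k < n) box_vol (a k) (b k) <= e).

Variables (d : measure_display) (Omega : measurableType d)
  (P : probability Omega R).

Definition rvec (eps : 'I_N -> Omega -> R) (w : Omega) : 'rV[R]_N :=
  \row_i eps i w.

Definition assumption1 (eps : 'I_N -> Omega -> R) : Prop :=
  (forall i, measurable_fun setT (eps i)) /\
  (forall i, P.-integrable setT (EFin \o eps i)) /\
  (forall i, (\int[P]_w (eps i w)%:E = 0)%E) /\
  (* law of eps absolutely continuous w.r.t. Lebesgue measure on R^N *)
  (forall B, lebesgue_null B ->
     exists A, measurable A /\ rvec eps @^-1` B `<=` A /\ P A = 0%E) /\
  (* support of the law of eps is all of R^N *)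
  (forall a b : 'rV[R]_N, (forall i, a ord0 i < b ord0 i) ->
     (0 < P [set w | forall i, (a ord0 i < eps i w < b ord0 i)%R])%E).

Definition phi (eps : 'I_N -> Omega -> R) (eta : R) (theta : 'rV[R]_N) : R :=
  fine (\int[P]_w
          (\big[Order.max/-oo%E]_(j < N) ((theta ord0 j + eta * eps j w)%:E))).

Definition assumption2 (eps : 'I_N -> Omega -> R) (L : R) : Prop :=
  C2 (phi eps 1) /\ 0 < L /\
  (forall theta, 2 * hess_trace (phi eps 1) theta <= L).

Definition Hmap (eps : 'I_N -> Omega -> R) (y : 'rV[R]_N) : 'rV[R]_N :=
  grad (fun theta => expR (phi eps 1 theta)) (vlog y).

Definition cumul (u : nat -> 'rV[R]_N) (t : nat) : 'rV[R]_N :=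
  \sum_(1 <= s < t.+1) u s.

Definition ssa (eps : 'I_N -> Omega -> R) (eta : R) (u : nat -> 'rV[R]_N)
  (t : nat) : 'rV[R]_N := grad (phi eps eta) (cumul u t.-1).

End Defs.

(* Main.v *)
Require Import Defs.
From HB Require Import structures.
From mathcomp Require Import all_boot all_order all_algebra.
From mathcomp Require Import all_classical all_reals all_analysis.
From mathcomp Require Import measurable_realfun lebesgue_integral.
Import Order.TTheory GRing.Theory Num.Theory.
Import numFieldNormedType.Exports.
Local Open Scope classical_set_scope.
Local Open Scope ring_scope.

Section Integ.
Variables (R : realType) (N : nat) (d : measure_display) (Omega : measurableType d)
  (P : probability Omega R) (eps : 'I_N -> Omega -> R).
Local Open Scope ereal_scope.

Lemma meas_bigmax (I : Type) (s : seq I) (F : I -> Omega -> \bar R) :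
  (forall i, measurable_fun [set: Omega] (F i : Omega -> \bar R)) ->
  measurable_fun [set: Omega] (fun w => \big[Order.max/-oo]_(j <- s) F j w : \bar R).
Proof.
move=> mF; elim: s => [|a s ih].
  under eq_fun do rewrite big_nil; exact: measurable_cst.
under eq_fun do rewrite big_cons.
exact: measurable_maxe.
Qed.

Lemma bigmax_le_b (I : Type) (s : seq I) (F : I -> \bar R) (B : \bar R) :
  (forall i, F i <= B) -> \big[Order.max/-oo]_(j <- s) F j <= B.
Proof.
move=> h; elim: s => [|a s ih]; first by rewrite big_nil leNye.
by rewrite big_cons ge_max h ih.
Qed.

Lemma abse_le_b (x M : \bar R) : - M <= x -> x <= M -> `|x| <= M.
Proof.
move: x M => [x| |] [m| |] //=.
- by rewrite !lee_fin => h1 h2; rewrite ler_norml h1 h2.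
- by move=> _ _; rewrite leey.
Qed.

Hypothesis A1 : assumption1 P eps.

Lemma integ_max (theta : 'rV[R]_N) : (0 < N)%N ->
  P.-integrable setT (fun w => \big[Order.max/-oo]_(j < N)
       ((theta ord0 j + eps j w)%R%:E)).
Proof.
move=> N0; case: A1 => meps [ieps _].
have iF j : P.-integrable setT (fun w => (theta ord0 j + eps j w)%R%:E).
  under eq_fun do rewrite EFinD.
  apply: (integrableD measurableT); last exact: ieps.
  exact: finite_measure_integrable_cst.
apply: (@le_integrable _ _ _ P setT measurableT _
   (fun w => \sum_(j < N) `|(theta ord0 j + eps j w)%R%:E|)).
- apply: meas_bigmax => j; apply/measurable_EFinP.
  by apply: measurable_funD; [exact: measurable_cst|exact: meps].
- move=> w _.
  have M0 : 0 <= \sum_(j < N) `|(theta ord0 j + eps j w)%R%:E|.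
    by apply: sume_ge0 => j _; exact: abse_ge0.
  rewrite (gee0_abs M0); apply: abse_le_b.
  + pose j0 : 'I_N := Ordinal N0.
    rewrite [X in _ <= X](bigD1 j0) //=.
    rewrite le_max; apply/orP; left.
    rewrite leeNl; apply: (le_trans (lee_abs _)); rewrite abseN.
    by rewrite (bigD1 j0) //= leeDl // sume_ge0.
  + apply: bigmax_le_b => j.
    apply: (le_trans (lee_abs _)).
    by rewrite (bigD1 j) //= leeDl // sume_ge0.
- apply: (integrable_sum measurableT) => j _; exact: integrable_abse.
Qed.

Local Close Scope ereal_scope.

Lemma phi1E (theta : 'rV[R]_N) : phi P eps 1 theta =
  fine (\int[P]_w \big[Order.max/-oo%E]_(j < N) ((theta ord0 j + eps j w)%:E))%E.
Proof.
rewrite /phi; congr (fine _); apply: eq_integral => w _.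
by apply: eq_bigr => j _; rewrite mul1r.
Qed.

Lemma phi_transl (theta : 'rV[R]_N) (c : R) : (0 < N)%N ->
  phi P eps 1 (theta + c *: const_mx 1) = phi P eps 1 theta + c.
Proof.
move=> N0; rewrite !phi1E.
have E : (fun w => \big[Order.max/-oo%E]_(j < N)
    (((theta + c *: const_mx 1) ord0 j + eps j w)%:E)) =
  (fun w => (\big[Order.max/-oo%E]_(j < N) ((theta ord0 j + eps j w)%:E)
     + c%:E)%E).
  apply/funext => w.
  rewrite (big_morph (fun x => x + c%:E)%E (fun x y => adde_maxl x y c%:E)
     (addNye _)).
  apply: eq_bigr => j _.
  by rewrite !mxE mulr1 -EFinD addrAC.
rewrite E integralD //; last 2 first.
- exact: integ_max.
- exact: finite_measure_integrable_cst.
rewrite integral_cst //.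
set m := (X in (c%:E * X)%E).
have -> : m = 1%E by rewrite /m; exact: probability_setT.
rewrite mule1 fineD //.
exact: integrable_fin_num (integ_max _ N0).
Qed.

Lemma phi_scale (theta : 'rV[R]_N) (eta : R) : (0 < N)%N -> 0 < eta ->
  phi P eps eta theta = eta * phi P eps 1 (eta^-1 *: theta).
Proof.
move=> N0 eta0; rewrite phi1E /phi.
have E : (fun w => \big[Order.max/-oo%E]_(j < N)
    ((theta ord0 j + eta * eps j w)%:E)) =
  (fun w => (eta%:E * \big[Order.max/-oo%E]_(j < N)
     (((eta^-1 *: theta) ord0 j + eps j w)%:E))%E).
  apply/funext => w.
  have e0 : (0 <= eta%:E)%E by rewrite lee_fin ltW.
  rewrite (big_morph (fun x => eta%:E * x)%E
     (fun x y => @maxe_pMr _ eta%:E x y isT e0) (_ : _ = -oo%E)); last first.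
    by rewrite mulrNy gtr0_sg // mul1e.
  apply: eq_bigr => j _.
  rewrite !mxE -EFinM; congr (_%:E).
  by rewrite mulrDr mulrA divff ?gt_eqF // mul1r.
rewrite E.
have := integralZl measurableT (integ_max (eta^-1 *: theta) N0) eta.
rewrite /= => ->.
rewrite fineM //.
exact: integrable_fin_num (integ_max _ N0).
Qed.
End Integ.

Section Calc.
Variables (R : realType) (N : nat).

Lemma D_transl (f : 'rV[R]_N -> R) (a : 'rV[R]_N) (c : R) (x v : 'rV[R]_N) :
  (forall y, f (y + a) = f y + c) -> 'D_v f (x + a) = 'D_v f x.
Proof.
move=> fa; rewrite /derive; f_equal; f_equal; apply/funext => h /=.
by rewrite addrA !fa opprD addrACA subrr addr0.
Qed.

Lemma D_one (f : 'rV[R]_N -> R) (x : 'rV[R]_N) :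
  (forall y (c : R), f (y + c *: const_mx 1) = f y + c) ->
  'D_(const_mx 1) f x = 1.
Proof.
move=> fc; rewrite /derive.
apply: lim_near_cst => //=.
near=> h.
have h0 : h != 0 by near: h; exact: nbhs_dnbhs_neq.
rewrite [h *: _ + x]addrC fc addrAC subrr add0r.
by rewrite /GRing.scale /= mulVf.
Unshelve. all: by end_near.
Qed.


Lemma D_comp_scale (f : 'rV[R]_N -> R) (k : R) (x v : 'rV[R]_N) :
  'D_v (fun y => f (k *: y)) x = 'D_(k *: v) f (k *: x) /\
  (derivable (fun y => f (k *: y)) x v <-> derivable f (k *: x) (k *: v)).
Proof.
have E : (fun h : R => h^-1 *: (((fun y => f (k *: y)) \o shift x) (h *: v)
             - f (k *: x))) =
         (fun h : R => h^-1 *: ((f \o shift (k *: x)) (h *: (k *: v))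
             - f (k *: x))).
  apply: funext => h /=; congr (_ *: (f _ - _)).
  by rewrite scalerDr !scalerA mulrC.
by rewrite /derive /derivable E.
Qed.

Lemma D_lin (f : 'rV[R]_N -> R) (k : R) (x v : 'rV[R]_N) :
  differentiable f x -> 'D_(k *: v) f x = k * 'D_v f x.
Proof. by move=> df; rewrite !deriveE // linearZ. Qed.

Lemma D_sum (f : 'rV[R]_N -> R) (x : 'rV[R]_N) : differentiable f x ->
  \sum_i partial i f x = 'D_(const_mx 1) f x.
Proof.
move=> df; rewrite /partial.
under eq_bigr do rewrite deriveE //.
rewrite deriveE // -linear_sum; congr ('d f x _).
apply/matrixP => a j; rewrite summxE !mxE.
rewrite (bigD1 j) //= !mxE big1 ?addr0 => [|i ij].
  by rewrite !eqxx ord1.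
by rewrite mxE [j == i]eq_sym (negbTE ij) andbF.
Qed.

Lemma D_exp (f : 'rV[R]_N -> R) (x v : 'rV[R]_N) : differentiable f x ->
  'D_v (fun y => expR (f y)) x = expR (f x) * 'D_v f x.
Proof.
move=> df.
have dexp : differentiable (@expR R) (f x).
  by apply/derivable1_diffP; exact: derivable_expR.
rewrite deriveE; last exact: differentiable_comp.
rewrite (diff_comp df dexp) /= (diff1E dexp) /= derive1E.
have -> : derive (@expR R) (f x) 1 = expR (f x).
  by have := @derive_expR R; move/(congr1 (fun g => g (f x))).
by rewrite -deriveE // mulrC.
Qed.

End Calc.
Theorem proposition4 (R : realType) (N : nat) (d : measure_display)
  (Omega : measurableType d) (P : probability Omega R)
  (eps : 'I_N -> Omega -> R) (L eta : R) (Phi : 'rV[R]_N -> 'rV[R]_N)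
  (T : nat) (u : nat -> 'rV[R]_N) :
  (2 <= N)%N ->
  assumption1 P eps ->
  assumption2 P eps L ->
  0 < eta ->
  (* H is a bijection of R^N_{++} onto itself with inverse Phi *)
  (forall y, posv y -> posv (Hmap P eps y)) ->
  (forall x, posv x -> posv (Phi x)) ->
  (forall y, posv y -> Phi (Hmap P eps y) = y) ->
  (forall x, posv x -> Hmap P eps (Phi x) = x) ->
  (forall t, (1 <= t <= T)%N -> posv (ssa P eps eta u t)) /\
  (forall t, (1 <= t)%N -> (t.+1 <= T)%N -> forall j : 'I_N,
     let v := vexp (eta^-1 *: u t + vlog (Phi (ssa P eps eta u t))) in
     ssa P eps eta u t.+1 ord0 j =
       Hmap P eps v ord0 j / \sum_(i < N) Hmap P eps v ord0 i).
Proof.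
move=> N2 A1 A2 eta0 Hpos Phipos PhiH HPhi.
have N0 : (0 < N)%N by apply: leq_trans N2.
set f := phi P eps 1.
case: A2 => [[df _] _].
have ftr : forall y c, f (y + c *: const_mx 1) = f y + c.
  by move=> y c; exact: (@phi_transl _ _ _ _ P eps A1 y c N0).
have gsum : forall x, \sum_i partial i f x = 1.
  by move=> x; rewrite D_sum // D_one.
have gtr : forall y c, grad f (y + c *: const_mx 1) = grad f y.
  move=> y c; apply/matrixP => a j; rewrite !mxE /partial.
  apply: (@D_transl _ _ f _ c) => w; exact: ftr.
have ssaE : forall t, ssa P eps eta u t = grad f (eta^-1 *: cumul u t.-1).
  move=> t; rewrite /ssa /grad; apply/matrixP => a j; rewrite !mxE /partial.
  have -> : phi P eps eta = eta \*: (fun th => f (eta^-1 *: th)).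
    by apply: funext => th; rewrite (@phi_scale _ _ _ _ P eps A1 th eta N0 eta0).
  have [E1 E2] := @D_comp_scale _ _ f eta^-1 (cumul u t.-1) (delta_mx ord0 j).
  have dv : derivable (fun th : 'rV[R]_N => f (eta^-1 *: th)) (cumul u t.-1)
      (delta_mx ord0 j).
    by apply/E2; exact: diff_derivable.
  rewrite (deriveZ eta dv) E1.
  rewrite (@D_lin _ _ f eta^-1 _ _ (df _)).
  set D := derive _ _ _.
  by apply: mulVKf; rewrite gt_eqF.
have vlK : forall z : 'rV[R]_N, vlog (vexp z) = z.
  by move=> z; apply/matrixP => a j; rewrite !mxE expRK.
have vpos : forall z : 'rV[R]_N, posv (vexp z).
  by move=> z j; rewrite mxE expR_gt0.
have Hm : forall z : 'rV[R]_N, Hmap P eps (vexp z) = expR (f z) *: grad f z.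
  move=> z; rewrite /Hmap /grad vlK; apply/matrixP => a j.
  by rewrite !mxE /partial D_exp.
have gpos : forall (z : 'rV[R]_N) j, 0 < grad f z ord0 j.
  move=> z j; have := Hpos (vexp z) (vpos z) j.
  by rewrite Hm mxE pmulr_rgt0 // expR_gt0.
split.
  by move=> t _ j; rewrite ssaE; exact: gpos.
move=> t t1 _ j /=.
have cumS : cumul u t = cumul u t.-1 + u t.
  by case: t t1 => // t _; rewrite /cumul big_nat_recr.
set z := eta^-1 *: cumul u t.-1.
set z' := eta^-1 *: cumul u t.
set c := f z.
have Phix : Phi (ssa P eps eta u t) = vexp (z + (- c) *: const_mx 1).
  rewrite ssaE -/z.
  have <- : Hmap P eps (vexp (z + (- c) *: const_mx 1)) = grad f z.
    by rewrite Hm ftr gtr addrN expR0 scale1r.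
  by rewrite PhiH.
rewrite Phix vlK.
have -> : eta^-1 *: u t + (z + (- c) *: const_mx 1) = z' + (- c) *: const_mx 1.
  by rewrite /z' cumS scalerDr -/z addrA [z + _]addrC.
rewrite Hm ftr gtr ssaE /= -/z'.
under eq_bigr do rewrite mxE.
rewrite mxE -mulr_sumr.
have -> : \sum_(i < N) grad f z' ord0 i = 1.
  by rewrite -(gsum z'); apply: eq_bigr => i _; rewrite mxE.
by rewrite mulr1 !mxE mulrC mulKf // gt_eqF // expR_gt0.
Qed.
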